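(* For every integer $t$, there exists a connected non-bipartite graph whose adjacency matrix has exactly four distinct eigenvalues and which has at least $t$ distinct valencies.
   Context: Graphs are finite, simple and undirected; eigenvalues of a graph are those of its adjacency matrix; valencies are vertex degrees. *)

(* Defs.v *)
From mathcomp Require Import all_boot all_order all_algebra.
From mathcomp Require Import algC.
Set Implicit Arguments. Unset Strict Implicit. Unset Printing Implicit Defensive.
Import GRing.Theory Num.Theory.
Local Open Scope ring_scope.

Definition simple_graph (n : nat) (e : rel 'I_n) : Prop :=
  symmetric e /\ irreflexive e.

(* Adjacency matrix, with entries in algC (algebraic complex numbers, an
   algebraically closed field of characteristic 0 containing all the
   (real) eigenvalues). *)
Definition adjmx (n : nat) (e : rel 'I_n) : 'M[algC]_n :=
  \matrix_(i, j) (e i j)%:R.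

Definition connected_graph (n : nat) (e : rel 'I_n) : Prop :=
  (0 < n)%N /\ forall x y : 'I_n, connect e x y.

Definition bipartite (n : nat) (e : rel 'I_n) : Prop :=
  exists c : 'I_n -> bool, forall x y, e x y -> c x != c y.

Definition valency (n : nat) (e : rel 'I_n) (x : 'I_n) : nat :=
  #|[set y | e x y]|.

Definition num_valencies (n : nat) (e : rel 'I_n) : nat :=
  size (undup [seq valency e x | x : 'I_n]).

Definition num_distinct_eigenvalues (n : nat) (e : rel 'I_n) (k : nat) : Prop :=
  exists s : seq algC, [/\ uniq s, size s = k &
    forall a : algC, eigenvalue (adjmx e) a <-> a \in s].

(* Main.v *)
Require Import Defs.
From mathcomp Require Import all_boot all_order all_algebra.
From mathcomp Require Import algC ring zify.
Set Implicit Arguments. Unset Strict Implicit. Unset Printing Implicit Defensive.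
Import Order.TTheory GRing.Theory Num.Theory.
Local Open Scope ring_scope.

Lemma sum_bool (T : finType) (P : pred T) : (\sum_(i : T) (P i : nat))%N = #|P|.
Proof. rewrite -sum1_card [RHS]big_mkcond /=; apply: eq_bigr => i _. by rewrite unfold_in; case: (P i). Qed.

Lemma card_supset (T : finType) (A : {set T}) :
  #|[set X : {set T} | A \subset X]| = (2 ^ (#|T| - #|A|))%N.
Proof.
have -> : [set X : {set T} | A \subset X] = [set Y :|: A | Y in powerset (~: A)].
  apply/setP => X; rewrite inE; apply/idP/imsetP.
  - move=> sAX; exists (X :\: A).
      by rewrite powersetE setDE subsetIr.
    by apply/setP => x; rewrite !inE; case: (boolP (x \in A)) => [/(subsetP sAX)->|]; rewrite ?orbT ?orbF.
  - by case=> Y _ ->; exact: subsetUr.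
rewrite card_in_imset ?card_powerset.
  by rewrite [#|~: A|]cardsCs setCK.
move=> Y1 Y2; rewrite !powersetE => H1 H2 E.
have D1 : [disjoint Y1 & A] by rewrite -[A]setCK -subsets_disjoint.
have D2 : [disjoint Y2 & A] by rewrite -[A]setCK -subsets_disjoint.
by have := congr1 (fun X => X :\: A) E; rewrite /= !setDUl setDv !setU0 (setDidPl D1) (setDidPl D2).
Qed.

Section Constr.
Variable v : nat.
Local Notation mm := (4 ^ (v - 2))%N.
Local Notation Bl := ({set 'I_v} + ('I_v * 'I_mm))%type.
Definition inc (B : Bl) (p : 'I_v) : bool :=
  match B with inl X => (p \in X) || (X == set0) | inr qj => qj.1 == p end.
Local Notation VV := ('I_v + Bl)%type.
Definition adjV (w1 w2 : VV) : bool :=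
  match w1, w2 with
  | inl p, inl q => p != q
  | inl p, inr B => inc B p
  | inr B, inl p => inc B p
  | inr _, inr _ => false
  end.
Definition nn := #|{: VV}|.
Definition ee : rel 'I_nn := fun i j => adjV (enum_val i) (enum_val j).

Lemma adjV_sym : symmetric adjV.
Proof. by case=> [p|B] [q|C] //=; rewrite eq_sym. Qed.

Lemma transport (a : algC) :
  eigenvalue (adjmx ee) a <->
  exists f : VV -> algC, (exists w, f w != 0) /\
    forall w, \sum_(w' : VV) f w' * (adjV w' w)%:R = a * f w.
Proof.
have key : forall (g : 'I_nn -> algC) (w : VV),
  \sum_(i < nn) g i * (adjmx ee) i (enum_rank w) =
  \sum_(w' : VV) g (enum_rank w') * (adjV w' w)%:R.
  move=> g w; rewrite (big_enum_val (A := {: VV})) /=.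
  apply: eq_bigr => i _; rewrite enum_valK mxE /ee enum_rankK //.
split.
- case/eigenvalueP => u Hu Hu0.
  exists (fun w => u 0 (enum_rank w)); split.
    case: (pickP (fun i => u 0 i != 0)) => [i Hi|H].
      by exists (enum_val i); rewrite enum_valK.
    case/negP: Hu0; apply/eqP/rowP => j; rewrite mxE [u 0 j](_ : _ = 0) //.
    by apply/eqP/negbFE; rewrite H.
  move=> w; rewrite -key.
  move/rowP: Hu => /(_ (enum_rank w)); rewrite !mxE => <-.
  by apply: eq_bigr => i _; rewrite !mxE.
- case=> f [[w0 Hw0] Hf]; apply/eigenvalueP.
  exists (\row_i f (enum_val i)).
    apply/rowP => j; rewrite -[j]enum_valK; move: (enum_val j) => w.
    rewrite !mxE (eq_bigr (fun i => f (enum_val i) * adjmx ee i (enum_rank w))); last first.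
      by move=> i _; rewrite mxE.
    rewrite key enum_rankK -Hf; apply: eq_bigr => w' _; by rewrite enum_rankK.
  apply/negP => /eqP/rowP/(_ (enum_rank w0)); rewrite !mxE enum_rankK.
  by move/eqP; rewrite (negbTE Hw0).
Qed.

Lemma count_inc (p q : 'I_v) :
  (\sum_(B : Bl) (inc B p && inc B q))%N =
  if p == q then (2 ^ (v - 1) + 1 + mm)%N else (2 ^ (v - 2) + 1)%N.
Proof.
rewrite big_sumType /=.
have E1 : (\sum_(X : {set 'I_v}) (((p \in X) || (X == set0)) && ((q \in X) || (X == set0))))%N
   = (2 ^ (v - #|[set p; q]|) + 1)%N.
  rewrite (eq_bigr (fun X : {set 'I_v} => ([set p; q] \subset X) + (X == set0))%N); last first.
    move=> X _; case: eqP => [->|_]; first by rewrite subUset !sub1set !inE.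
    by rewrite !orbF subUset !sub1set addn0.
  rewrite big_split /= (sum_bool (fun X : {set 'I_v} => [set p; q] \subset X)) (sum_bool (pred1 set0)).
  rewrite card1; have := card_supset [set p; q]; rewrite card_ord => <-.
  by congr (_ + _)%N; apply: eq_card => X; rewrite inE.
rewrite E1 cards2.
rewrite -(pair_bigA _ (fun a (_ : 'I_mm) => ((a == p) && (a == q) : nat))) /=.
rewrite (eq_bigr (fun a => ((a == p) && (a == q)) * mm)%N); last first.
  by move=> a _; rewrite sum_nat_const card_ord mulnC.
rewrite -big_distrl /= (sum_bool (fun a => (a == p) && (a == q))).
case: (eqVneq p q) => [<-|npq] /=.
  have -> : #|(fun a => (a == p) && (a == p))| = 1%N.
    by rewrite -(card1 p); apply: eq_card => a; rewrite !unfold_in /= andbb.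
  by rewrite mul1n subn1.
have -> : #|(fun a => (a == p) && (a == q))| = 0%N.
  apply: eq_card0 => a /=; apply/negP => /andP[/eqP -> /eqP E]; by rewrite E eqxx in npq.
by rewrite mul0n addn0 subn2.
Qed.
Local Notation rr := (2 ^ (v - 1) + 1 + mm)%N.
Local Notation LL := (2 ^ (v - 2) + 1)%N.

Lemma rL (hv : (2 <= v)%N) : rr = (LL * LL)%N.
Proof.
have -> : (v - 1 = (v - 2).+1)%N by lia.
rewrite expnS (_ : 4 = 2 * 2)%N // expnMn; ring.
Qed.

Lemma sumV (f : VV -> algC) (w : VV) :
  \sum_(w' : VV) f w' * (adjV w' w)%:R =
  match w with
  | inl p0 => \sum_(p : 'I_v) f (inl p) * (p != p0)%:R +
              \sum_(B : Bl) f (inr B) * (inc B p0)%:R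
  | inr B0 => \sum_(p : 'I_v) f (inl p) * (inc B0 p)%:R
  end.
Proof.
rewrite big_sumType; case: w => [p0|B0] //=.
by rewrite [X in _ + X]big1 ?addr0 // => B _; rewrite mulr0.
Qed.

Lemma design (x : 'I_v -> algC) (p0 : 'I_v) :
  \sum_(B : Bl) (inc B p0)%:R * (\sum_(p : 'I_v) x p * (inc B p)%:R) =
  (rr%:R - LL%:R) * x p0 + LL%:R * \sum_(p : 'I_v) x p.
Proof.
under eq_bigr do rewrite mulr_sumr.
rewrite exchange_big /=.
rewrite (eq_bigr (fun p => x p * (if p0 == p then rr else LL)%:R)); last first.
  move=> p _; rewrite -count_inc natr_sum mulr_sumr; apply: eq_bigr => B _.
  by case: (inc B p0); case: (inc B p); rewrite /= ?mulr0 ?mul0r ?mulr1 ?mul1r.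
rewrite (bigD1 p0) //= eqxx.
rewrite (eq_bigr (fun p => x p * LL%:R)); last first.
  by move=> p; rewrite eq_sym => /negbTE ->.
rewrite [X in _ = _ + _ * X](bigD1 p0) //= -mulr_suml; ring.
Qed.

Lemma sum_delta (T : finType) (q : T) : \sum_(p : T) ((p == q)%:R : algC) = 1.
Proof. by rewrite (bigD1 q) //= eqxx big1 ?addr0 // => p /negbTE ->. Qed.

Lemma sum_delta_mul (T : finType) (q : T) (g : T -> algC) :
  \sum_(w : T) (w == q)%:R * g w = g q.
Proof. by rewrite (bigD1 q) //= eqxx mul1r big1 ?addr0 // => p /negbTE ->; rewrite mul0r. Qed.

Lemma sum_neq (x : 'I_v -> algC) (p0 : 'I_v) :
  \sum_(p : 'I_v) x p * (p != p0)%:R = \sum_(p : 'I_v) x p - x p0.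
Proof.
rewrite [X in _ = X - _](bigD1 p0) //= [in RHS]addrC addrK (bigD1 p0) //= eqxx mulr0 add0r.
by apply: eq_bigr => p ->; rewrite mulr1.
Qed.

Definition eigs : seq algC := [:: 0; - LL%:R; LL%:R - 1; v%:R + LL%:R - 1].

Lemma eig_in (hv : (2 <= v)%N) (a : algC) (f : VV -> algC) :
  (exists w, f w != 0) ->
  (forall w, \sum_(w' : VV) f w' * (adjV w' w)%:R = a * f w) -> a \in eigs.
Proof.
move=> [w0 Hw0] Hf.
have EB : forall B, \sum_(p : 'I_v) f (inl p) * (inc B p)%:R = a * f (inr B).
  by move=> B; rewrite -Hf sumV.
have EP : forall p0, \sum_(p : 'I_v) f (inl p) * (p != p0)%:R +
     \sum_(B : Bl) f (inr B) * (inc B p0)%:R = a * f (inl p0).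
  by move=> p0; rewrite -Hf sumV.
case: (eqVneq a 0) => [->|a0]; first by rewrite inE eqxx.
pose x := fun p => f (inl p).
pose s := \sum_(p : 'I_v) x p.
have EY : forall B, f (inr B) = a^-1 * \sum_(p : 'I_v) x p * (inc B p)%:R.
  by move=> B; rewrite EB mulKf.
have key : forall p0, (a + LL%:R) * s = (a + LL%:R) * (a - LL%:R + 1) * x p0.
  move=> p0; have := EP p0; rewrite -/(x p0).
  rewrite (eq_bigr (fun B => a^-1 * ((inc B p0)%:R * \sum_(p : 'I_v) x p * (inc B p)%:R))); last first.
    by move=> B _; rewrite EY; ring.
  rewrite -mulr_sumr design sum_neq (rL hv) natrM -/s => E.
  have E' : a * (s - x p0) + ((LL%:R * LL%:R - LL%:R) * x p0 + LL%:R * s) = a * (a * x p0).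
    by rewrite -[in RHS]E [in RHS]mulrDr mulVKf.
  apply/eqP; rewrite -subr_eq0.
  have <- : a * (s - x p0) + ((LL%:R * LL%:R - LL%:R) * x p0 + LL%:R * s) - a * (a * x p0)
     = (a + LL%:R) * s - (a + LL%:R) * (a - LL%:R + 1) * x p0 by ring.
  by rewrite E' subrr.
case: (eqVneq a (- LL%:R)) => [->|aL]; first by rewrite !inE eqxx orbT.
have aL' : a + LL%:R != 0 by rewrite addr_eq0.
have key2 : forall p0, s = (a - LL%:R + 1) * x p0.
  by move=> p0; apply: (mulfI aL'); rewrite (key p0) mulrA.
case: (eqVneq a (LL%:R - 1)) => [->|a1]; first by rewrite !inE eqxx !orbT.
have c0 : a - LL%:R + 1 != 0.
  have -> : a - LL%:R + 1 = a - (LL%:R - 1) by ring.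
  by rewrite subr_eq0.
have Hx : forall p0, x p0 = s / (a - LL%:R + 1).
  by move=> p0; rewrite (key2 p0) mulrC mulKf.
have Hs : s = v%:R * (s / (a - LL%:R + 1)).
  by rewrite {1}/s (eq_bigr _ (fun p _ => Hx p)) sumr_const card_ord mulr_natl.
case: (eqVneq s 0) => [s0|s0].
  exfalso; move: Hw0; apply/negP; rewrite negbK.
  case: w0 => [p|B].
    by have := Hx p; rewrite /x => ->; rewrite s0 mul0r.
  rewrite EY (eq_bigr (fun _ => 0)) ?big1 ?mulr0 // => p _.
  by rewrite /x -/(x p) Hx s0 mul0r mul0r.
have Hc : a - LL%:R + 1 = v%:R.
  apply: (mulfI s0).
  by rewrite {1}Hs -mulrA mulfVK // mulrC.
have -> : a = v%:R + LL%:R - 1 by rewrite -Hc; ring.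
by rewrite !inE eqxx !orbT.
Qed.

Lemma mkf (a : algC) (x : 'I_v -> algC) : a != 0 ->
  (forall p0, (\sum_(p : 'I_v) x p - x p0) +
      a^-1 * ((rr%:R - LL%:R) * x p0 + LL%:R * \sum_(p : 'I_v) x p) = a * x p0) ->
  (exists p, x p != 0) ->
  exists f : VV -> algC, (exists w, f w != 0) /\
    forall w, \sum_(w' : VV) f w' * (adjV w' w)%:R = a * f w.
Proof.
move=> a0 Hx [p Hp].
exists (fun w => match w with
         | inl p => x p
         | inr B => a^-1 * \sum_(p : 'I_v) x p * (inc B p)%:R end).
split; first by exists (inl p).
move=> w; rewrite sumV; case: w => [p0|B0] /=; last by rewrite mulVKf.
rewrite sum_neq -Hx -design mulr_sumr; congr (_ + _).
by apply: eq_bigr => B _; ring.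
Qed.

Lemma LL_ge2 (hv : (2 <= v)%N) : (2 <= LL)%N.
Proof. by rewrite addn1 ltnS expn_gt0. Qed.

Lemma eig_ex (hv : (2 <= v)%N) (a : algC) : a \in eigs ->
  exists f : VV -> algC, (exists w, f w != 0) /\
    forall w, \sum_(w' : VV) f w' * (adjV w' w)%:R = a * f w.
Proof.
have L2 := LL_ge2 hv.
have hrL : rr%:R - LL%:R = (LL%:R * LL%:R - LL%:R : algC) by rewrite (rL hv) natrM.
have p0v : (0 < v)%N by apply: leq_trans hv.
pose p0 : 'I_v := Ordinal p0v.
pose p1 : 'I_v := Ordinal hv.
have np01 : p0 != p1 by [].
have LLn0 : (LL%:R : algC) != 0 by rewrite pnatr_eq0; case: (LL) L2.
have nonpr : forall b : algC, b != 0 -> b * (b + 1) = LL%:R * LL%:R - LL%:R ->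
    exists f : VV -> algC, (exists w, f w != 0) /\
      forall w, \sum_(w' : VV) f w' * (adjV w' w)%:R = b * f w.
  move=> b b0 hb.
  pose x := fun p : 'I_v => ((p == p0)%:R - (p == p1)%:R : algC).
  have sx : \sum_(p : 'I_v) x p = 0 by rewrite sumrB !sum_delta subrr.
  apply: (mkf (x := x)) => //.
    move=> q; rewrite sx mulr0 addr0 add0r hrL -hb.
    by rewrite mulrA mulKf //; ring.
  by exists p0; rewrite /x eqxx (negbTE np01) subr0 oner_eq0.
rewrite !inE; case/or4P => /eqP ->.
-
  pose f := fun w : VV => ((w == inr (inl set0))%:R - (w == inr (inl setT))%:R : algC).
  exists f; split.
    exists (inr (inl set0)); rewrite /f eqxx.
    have -> : (inr (inl set0) == inr (inl setT) :> VV) = false.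
      apply/negbTE; apply/eqP => -[] /setP /(_ p0); by rewrite !inE.
    by rewrite subr0 oner_eq0.
  move=> w; rewrite mul0r /f.
  under eq_bigr do rewrite mulrBl.
  rewrite sumrB (sum_delta_mul _ (fun w' => (adjV w' w)%:R)) (sum_delta_mul _ (fun w' => (adjV w' w)%:R)).
  by case: w => [q|B] /=; rewrite ?eqxx ?in_setT ?orbT ?subrr.
- apply: nonpr; first by rewrite oppr_eq0.
  by ring.
- apply: nonpr; last by ring.
  rewrite subr_eq0 -[X in _ != X]mulr1n eqr_nat.
  by case: (LL) L2 => [|[|k]].
- have ha : v%:R + LL%:R - 1 != 0 :> algC.
    rewrite -natrD -[X in _ - X]mulr1n -natrB ?pnatr_eq0; lia.
  apply: (mkf (x := fun _ => 1)) => //.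
  + move=> q; rewrite sumr_const card_ord mulr1 hrL.
    have -> : (LL%:R * LL%:R - LL%:R) * 1 + LL%:R * (1 *+ v) =
              (v%:R + LL%:R - 1) * LL%:R :> algC by ring.
    rewrite mulKf //; ring.
  + by exists p0; rewrite oner_eq0.
Qed.

Lemma eigs_uniq (hv : (2 <= v)%N) : uniq eigs.
Proof.
have L2 := LL_ge2 hv.
have h1 : (- LL%:R : algC) < 0 by rewrite oppr_lt0 ltr0n; case: (LL) L2.
have h2 : (0 : algC) < LL%:R - 1 by rewrite subr_gt0 ltr1n.
have h3 : (LL%:R - 1 : algC) < v%:R + LL%:R - 1.
  have -> : v%:R + LL%:R - 1 = v%:R + (LL%:R - 1) :> algC by ring.
  by rewrite -subr_gt0 addrK ltr0n; case: (v) hv.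
rewrite /eigs /= !inE !negb_or.
rewrite (gt_eqF h1) (lt_eqF h2) (lt_eqF (lt_trans h2 h3)) (lt_eqF (lt_trans h1 h2)).
by rewrite (lt_eqF (lt_trans h1 (lt_trans h2 h3))) (lt_eqF h3).
Qed.

Lemma eeE (w1 w2 : VV) : ee (enum_rank w1) (enum_rank w2) = adjV w1 w2.
Proof. by rewrite /ee !enum_rankK. Qed.

Lemma ee_sym : symmetric ee.
Proof. by move=> i j; rewrite /ee adjV_sym. Qed.

Lemma ee_irr : irreflexive ee.
Proof. by move=> i; rewrite /ee; case: (enum_val i) => [p|B] //=; rewrite eqxx. Qed.

Lemma ee_connected (hv : (2 <= v)%N) : connected_graph ee.
Proof.
have p0v : (0 < v)%N by apply: leq_trans hv.
pose q0 : 'I_v := Ordinal p0v.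
have cpt : forall p : 'I_v, connect ee (enum_rank (inl p : VV)) (enum_rank (inl q0 : VV)).
  move=> p; case: (eqVneq p q0) => [->|npq]; first exact: connect0.
  by apply: connect1; rewrite eeE /=.
have cw : forall w : VV, connect ee (enum_rank w) (enum_rank (inl q0 : VV)).
  case=> [p|[X|[q j]]]; first exact: cpt.
  - case: (eqVneq X set0) => [->|/set0Pn [p Hp]].
      by apply: connect1; rewrite eeE /= eqxx orbT.
    apply: (connect_trans _ (cpt p)); apply: connect1; by rewrite eeE /= Hp.
  - apply: (connect_trans _ (cpt q)); apply: connect1; by rewrite eeE /=.
split; first by apply/card_gt0P; exists (inl q0 : VV).
move=> x y; rewrite -(enum_valK x) -(enum_valK y).
apply: (connect_trans (cw _)); rewrite (sym_connect_sym ee_sym); exact: cw.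
Qed.

Lemma ee_nonbip (hv : (3 <= v)%N) : ~ bipartite ee.
Proof.
have h0 : (0 < v)%N by apply: leq_trans hv.
have h1 : (1 < v)%N by apply: leq_trans hv.
pose a0 : 'I_v := Ordinal h0. pose a1 : 'I_v := Ordinal h1. pose a2 : 'I_v := Ordinal hv.
case=> c Hc.
have H01 := Hc _ _ (eeE (inl a0) (inl a1)).
have H12 := Hc _ _ (eeE (inl a1) (inl a2)).
have H02 := Hc _ _ (eeE (inl a0) (inl a2)).
by move: H01 H12 H02; case: (c _); case: (c _); case: (c _).
Qed.

Definition Sk (k : 'I_v) : {set 'I_v} := [set widen_ord (ltn_ord k) i | i : 'I_k.+1].

Lemma card_nbr (w : VV) :
  #|[set y | ee (enum_rank w) y]| = #|[set w' : VV | adjV w w']|.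
Proof.
rewrite -(card_imset _ enum_val_inj); apply: eq_card => w'.
rewrite inE; apply/imsetP/idP.
  by case=> y; rewrite inE /ee enum_rankK => Hy ->.
by move=> H; exists (enum_rank w'); rewrite ?inE /ee !enum_rankK.
Qed.

Lemma valency_Sk (k : 'I_v) : valency ee (enum_rank (inr (inl (Sk k)) : VV)) = k.+1.
Proof.
rewrite /valency card_nbr.
have inj : injective (@inl 'I_v Bl) by move=> a b [].
have ne : (Sk k == set0) = false.
  apply/negbTE/set0Pn; exists (widen_ord (ltn_ord k) ord0); exact: imset_f.
have -> : [set w' : VV | adjV (inr (inl (Sk k))) w'] = inl @: Sk k.
  apply/setP => w'; rewrite inE; case: w' => [p|B] /=.
    by rewrite ne orbF (mem_imset _ _ inj).
  by apply/esym/imsetP => -[p _].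
have winj : injective (widen_ord (ltn_ord k)) by move=> a b [] /val_inj.
by rewrite (card_imset _ inj) (card_imset _ winj) card_ord.
Qed.

Lemma nval : (v <= num_valencies ee)%N.
Proof.
rewrite /num_valencies.
have H : (size [seq (val k).+1 | k : 'I_v] <= size (undup [seq valency ee x | x : 'I_nn]))%N.
  apply: uniq_leq_size.
    rewrite map_inj_uniq ?enum_uniq // => a b /eqP; rewrite eqSS => /eqP; exact: val_inj.
  move=> z /mapP [k _ ->]; rewrite mem_undup -(valency_Sk k).
  exact: image_f.
by move: H; rewrite size_map size_enum_ord.
Qed.

End Constr.

Close Scope ring_scope.

Theorem theorem9 (t : int) :
  exists (n : nat) (e : rel 'I_n),
    [/\ simple_graph e, connected_graph e, ~ bipartite e,
        num_distinct_eigenvalues e 4 &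
        (t <= (num_valencies e)%:Z)%R].
Proof.
pose v := (absz t).+3.
have hv3 : (3 <= v)%N by [].
have hv : (2 <= v)%N by [].
exists (nn v), (@ee v); split.
- by split; [exact: ee_sym | exact: ee_irr].
- exact: ee_connected.
- exact: ee_nonbip.
- exists (eigs v); split; [exact: eigs_uniq | by [] |].
  move=> a; split.
    by case/transport => f [Hw Hf]; exact: (eig_in hv Hw Hf).
  by move/(eig_ex hv)/transport.
- have H : (`|t| <= (num_valencies (@ee v))%:Z)%R.
    rewrite -abszE lez_nat; apply: leq_trans (nval v); rewrite /v; lia.
  exact: Order.le_trans (Num.Theory.ler_norm t) H.
Qed.
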